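(* Let $(Z,Y)$ be random with $Z\in[0,1]$, $Y\in\{0,1\}$, let $g:[0,1]\to[0,1]$, let $\alpha\ge1$, and let $\mathcal{B}=\{I_1,\dots,I_B\}$ be an $\alpha$-well-balanced binning scheme of size $B$ (with respect to $g(Z)$). Then $\mathrm{MSE}(g_{\mathcal{B}})\le \mathrm{MSE}(g)+\frac{2\alpha}{B}$.
   Context: A binning scheme of size $B$ is a set of intervals $I_1,\dots,I_B$ partitioning $[0,1]$; $\beta(z)$ is the index $j$ with $z\in I_j$. It is $\alpha$-well-balanced if $\frac{1}{\alpha B}\le\Pr(g(Z)\in I_j)\le\frac{\alpha}{B}$ for all $j$. $g_{\mathcal{B}}(z)=\mathbb{E}[g(Z)\mid g(Z)\in I_{\beta(g(z))}]$ and $\mathrm{MSE}(h)=\mathbb{E}[(h(Z)-Y)^2]$. *)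

(* Defs.v *)
From mathcomp Require Import all_boot all_order all_algebra.
From mathcomp Require Import all_classical all_reals all_analysis.
Set Implicit Arguments. Unset Strict Implicit. Unset Printing Implicit Defensive.
Import Order.TTheory GRing.Theory Num.Theory.
Local Open Scope classical_set_scope.
Local Open Scope ring_scope.

Definition cond_mean_in {d} {T : measurableType d} {R : realType}
  (P : probability T R) (X : T -> R) (A : set R) : R :=
  fine ('E_P[(fun w => (X w * \1_A (X w))%R)])%E / fine (P (X @^-1` A)).

Definition bin_index {R : realType} {B : nat} (I : 'I_B -> interval R) (z : R)
  : option 'I_B := [pick j | z \in I j].

(* g_B(z) = E[g(Z) | g(Z) \in I_{beta(g(z))}] ; default g z never used on [0,1] *)
Definition binned {d} {T : measurableType d} {R : realType}
  (P : probability T R) (Z : T -> R) (g : R -> R) {B : nat}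
  (I : 'I_B -> interval R) (z : R) : R :=
  match bin_index I (g z) with
  | Some j => cond_mean_in P (g \o Z) [set` I j]
  | None => g z
  end.

Definition MSE {d} {T : measurableType d} {R : realType}
  (P : probability T R) (Z Y : T -> R) (h : R -> R) : \bar R :=
  ('E_P[(fun w => ((h (Z w) - Y w) ^+ 2)%R)])%E.

Definition binning_scheme {R : realType} {B : nat} (I : 'I_B -> interval R) : Prop :=
  (forall j, [set` I j] `<=` `[0, 1]) /\
  (forall x : R, 0 <= x <= 1 -> exists! j, x \in I j).

Definition well_balanced {d} {T : measurableType d} {R : realType}
  (P : probability T R) (X : T -> R) (alpha : R) {B : nat}
  (I : 'I_B -> interval R) : Prop :=
  forall j, ((1 / (alpha * B%:R))%:E <= P (X @^-1` [set` I j])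
             /\ P (X @^-1` [set` I j]) <= (alpha / B%:R)%:E)%E.

(* Main.v *)
Require Import Defs.
From mathcomp Require Import all_boot all_order all_algebra.
From mathcomp Require Import all_classical all_reals all_analysis.
From mathcomp Require Import measurable_realfun.
Import Order.TTheory GRing.Theory Num.Theory.
Local Open Scope classical_set_scope.
Local Open Scope ring_scope.
From mathcomp Require Import ring lra.

Lemma width_le (R : realType) (A : interval R) (x y : R) :
  x \in A -> y \in A -> ((`|x - y|)%:E <= lebesgue_measure ([set` A] : set R))%E.
Proof.
wlog xy : x y / x <= y.
  move=> H xA yA; case: (leP x y) => xy; first exact: H.
  by rewrite distrC; apply: H => //; exact: ltW.
move=> xA yA.
have sub : `[x, y] `<=` [set` A].
  move=> z /=; rewrite in_itv /= => /andP[xz zy].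
  exact: (@interval_is_interval R A x y xA yA z (introT andP (conj xz zy))).
have H := @le_measure _ _ _ (@lebesgue_measure R) `[x, y]%classic [set` A].
move: H => /(_ (ltac:(rewrite inE; exact: measurable_itv)) (ltac:(rewrite inE; exact: measurable_itv)) sub) H.
have E := @lebesgue_measure_itv R `[x, y].
suff : ((`|x - y|)%:E <= (if (`[x, y]%O.1 < `[x, y]%O.2)%E then ((`[x, y]%O.2 : \bar R) - `[x, y]%O.1)%E else 0))%E.
  move=> h; apply: le_trans h _; rewrite -E; exact: H.
rewrite /= distrC ger0_norm ?subr_ge0 //.
case: (ltP x y) => [xy'|yx]; first by rewrite lte_fin xy' -EFinD.
have -> : y = x by apply/eqP; rewrite eq_le xy yx.
by rewrite subrr ltxx.
Qed.

Lemma int_indic d (T : measurableType d) (R : realType) (P : probability T R)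
  (X : T -> R) (mX : measurable_fun setT X) (A : set R) (mA : measurable A)
  (c : R) (c0 : 0 <= c) :
  (\int[P]_w ((c * \1_A (X w))%:E) = c%:E * P (X @^-1` A))%E.
Proof.
have mXA : measurable (X @^-1` A) by rewrite -[X @^-1` A]setTI; exact: mX.
rewrite (eq_integral (fun w => c%:E * (\1_(X @^-1` A) w)%:E)%E); last first.
  by move=> w _; rewrite EFinM !indicE.
rewrite ge0_integralZl //; first by rewrite integral_indic // setIT.
- by apply/measurable_EFinP; exact: measurable_realfun.measurable_indic.
Qed.

Lemma cmean_bounds d (T : measurableType d) (R : realType) (P : probability T R)
  (X : T -> R) (mX : measurable_fun setT X) (A : set R) (mA : measurable A)
  (lo hi : R) (lo0 : 0 <= lo) (lohi : lo <= hi) (hA : forall x, A x -> lo <= x <= hi)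
  (p : R) (p0 : 0 < p) (hp : P (X @^-1` A) = p%:E) :
  lo <= cond_mean_in P X A <= hi.
Proof.
rewrite /cond_mean_in hp /=.
have mf : measurable_fun setT (fun w => X w * \1_A (X w)).
  apply: measurable_funM => //.
  exact: (measurableT_comp (measurable_realfun.measurable_indic mA) mX).
have mI : measurable_fun setT (fun w => \1_A (X w) : R).
  exact: (measurableT_comp (measurable_realfun.measurable_indic mA) mX).
have pw : forall w, lo * \1_A (X w) <= X w * \1_A (X w) <= hi * \1_A (X w).
  move=> w; rewrite !indicE; case: (boolP (X w \in A)) => h.
    by rewrite !mulr1; apply: hA; exact: set_mem h.
  by rewrite !mulr0 lexx.
have hi0 : forall w, 0 <= hi * \1_A (X w).
  move=> w; have /andP[+ +] := pw w; move=> a b.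
  apply: le_trans b; apply: le_trans a; rewrite indicE mulr_ge0 //.
have f0 : forall w, 0 <= X w * \1_A (X w).
  move=> w; have /andP[+ +] := pw w; move=> a b.
  apply: le_trans a; rewrite indicE mulr_ge0 //.
set E := ('E_P[_])%E.
have lower : ((lo * p)%:E <= E)%E.
  rewrite EFinM -hp -int_indic // /E unlock.
  apply: ge0_le_integral => //.
  - by move=> w _; rewrite lee_fin indicE mulr_ge0.
  - by apply/measurable_EFinP; apply: measurable_funM.
  - by apply/measurable_EFinP.
  - by move=> w _; rewrite lee_fin; case/andP: (pw w).
have upper : (E <= (hi * p)%:E)%E.
  rewrite EFinM -hp -int_indic //; last exact: le_trans lo0 lohi.
  rewrite /E unlock.
  apply: ge0_le_integral => //.
  - by move=> w _; rewrite lee_fin.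
  - by apply/measurable_EFinP.
  - by apply/measurable_EFinP; apply: measurable_funM.
  - by move=> w _; rewrite lee_fin; case/andP: (pw w).
have E0 : (0 <= E)%E by apply: le_trans lower; rewrite lee_fin mulr_ge0 // ltW.
have Efin : E \is a fin_num.
  by rewrite ge0_fin_numE //; apply: le_lt_trans upper _; exact: ltey.
rewrite -(fineK Efin) !lee_fin in lower upper.
by rewrite ler_pdivlMr // ler_pdivrMr // lower upper.
Qed.

Lemma sum_width (R : realType) (B : nat) (I : 'I_B -> interval R) :
  binning_scheme I -> (\sum_(k < B) lebesgue_measure ([set` I k] : set R) <= 1)%E.
Proof.
case=> sub un.

rewrite -measure_bigsetU_ord; last 2 first.
- by move=> k; exact: measurable_itv.
- move=> i j _ _ [x [xi xj]].
  have x01 : 0 <= x <= 1 by have := sub i x xi; rewrite /= in_itv.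
  have [k [_ hk]] := un x x01.
  by rewrite -(hk i xi) -(hk j xj).
have S : \big[setU/set0]_(k < B) ([set` I k] : set R) `<=` `[0, 1]%classic.
  apply: (big_ind (fun S : set R => S `<=` `[0, 1]%classic)) => //.
  by move=> S1 S2 h1 h2 x [/h1|/h2].
have E := @lebesgue_measure_itv R `[0, 1].
have H2 := @le_measure _ _ _ (@lebesgue_measure R) _ `[0, 1]%classic _ _ S.
apply: le_trans (H2 _ _) _.
- rewrite inE; apply: bigsetU_measurable => k _; exact: measurable_itv.
- rewrite inE; exact: measurable_itv.
move: E; rewrite /= lte_fin ltr01 -EFinD subr0 => E.
rewrite -[X in (_ <= X)%E]E; exact: lexx.
Qed.

Theorem mainTheorem6 (d : measure_display) (T : measurableType d) (R : realType)
  (P : probability T R) (Z Y : T -> R) (g : R -> R) (alpha : R) (B : nat)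
  (I : 'I_B -> interval R) :
  measurable_fun setT Z -> measurable_fun setT Y ->
  (forall w, 0 <= Z w <= 1) -> (forall w, Y w = 0 \/ Y w = 1) ->
  measurable_fun (`[0, 1] : set R) g -> (forall x, 0 <= x <= 1 -> 0 <= g x <= 1) ->
  1 <= alpha ->
  binning_scheme I -> well_balanced P (g \o Z) alpha I ->
  (MSE P Z Y (binned P Z g I) <= MSE P Z Y g + (2 * alpha / B%:R)%:E)%E.
Proof.
move=> mZ mY Z01 Y01 mg g01 a1 bs wb.
set X := g \o Z.
have hX : forall w, 0 <= X w <= 1 := fun w => g01 _ (Z01 w).
have mX : measurable_fun setT X.
  have sZ : Z @` setT `<=` `[0, 1]%classic.
    by move=> _ [w _ <-]; rewrite /= in_itv /=; exact: Z01 w.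
  exact: (measurable_comp (measurable_itv `[0, 1]) sZ mg mZ).
have [sub un] := bs.
have B0 : (0 < B)%N.
  have [j [_ _]] := un 0 (ltac:(by rewrite lexx ler01)).
  exact: leq_ltn_trans (leq0n j) (ltn_ord j).
have Br : 0 < B%:R :> R by rewrite ltr0n.
have a0 : 0 < alpha by exact: lt_le_trans ltr01 a1.
pose A k := ([set` I k] : set R).
have mA : forall k, measurable (A k) by move=> k; exact: measurable_itv.
pose p k := fine (P (X @^-1` A k)).
have hp : forall k, P (X @^-1` A k) = (p k)%:E.
  move=> k; rewrite /p fineK // ge0_fin_numE ?measure_ge0 //.
  by have [_ h] := wb k; apply: le_lt_trans h _; exact: ltey.
have pp : forall k, 0 < p k.
  move=> k; have [h _] := wb k; rewrite hp lee_fin in h.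
  by apply: lt_le_trans h; rewrite divr_gt0 // mulr_gt0.
have pup : forall k, p k <= alpha / B%:R.
  by move=> k; have [_ h] := wb k; rewrite hp lee_fin in h.
have SW := @sum_width R B I bs.
have lam0 : forall k, (lebesgue_measure (A k) <= 1)%E.
  move=> k; apply: le_trans SW; rewrite (bigD1 k) //=; apply: leeDl.
  by apply: sume_ge0 => j _; exact: measure_ge0.
pose wd k := fine (lebesgue_measure (A k)).
have hw : forall k, lebesgue_measure (A k) = (wd k)%:E.
  move=> k; rewrite /wd fineK // ge0_fin_numE ?measure_ge0 //.
  by apply: le_lt_trans (lam0 k) _; exact: ltey.
have w0 : forall k, 0 <= wd k.
  by move=> k; rewrite -lee_fin -hw measure_ge0.
have sw : \sum_(k < B) wd k <= 1.
  by rewrite -lee_fin -sumEFin; under eq_bigr => k _ do rewrite -hw.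
pose mu k := cond_mean_in P X (A k).
have mub : forall k x, x \in I k ->
    [/\ 0 <= mu k, mu k <= 1, x - wd k <= mu k & mu k <= x + wd k].
  move=> k x xk.
  have x01 : 0 <= x <= 1 by have := sub k x xk; rewrite /= in_itv.
  have hA : forall y, A k y -> Num.max 0 (x - wd k) <= y <= Num.min 1 (x + wd k).
    move=> y yk.
    have y01 : 0 <= y <= 1 by have := sub k y yk; rewrite /= in_itv.
    have := @width_le R (I k) x y xk yk; rewrite -/(A k) hw lee_fin ler_norml => /andP[h1 h2].
    have := w0 k; move: x01 y01 => /andP[? ?] /andP[? ?] ?.
    rewrite ge_max le_min; apply/andP; split; apply/andP; split; lra.
  have lohi : Num.max 0 (x - wd k) <= Num.min 1 (x + wd k).
    have := w0 k; move: x01 => /andP[? ?] ?.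
    rewrite ge_max !le_min; apply/andP; split; apply/andP; split; lra.
  have lo0 : 0 <= Num.max 0 (x - wd k) by rewrite le_max lexx.
  have := @cmean_bounds _ _ _ P X mX (A k) (mA k) (Num.max 0 (x - wd k))
    (Num.min 1 (x + wd k)) lo0 lohi hA (p k) (pp k) (hp k).
  rewrite -/(mu k) ge_max le_min.
  by move=> /andP[/andP[? ?] /andP[? ?]]; split.
have binw : forall w, exists k, X w \in I k /\
    binned P Z g I (Z w) = mu k /\ (forall j, j != k -> \1_(A j) (X w) = 0 :> R).
  move=> w; have [k [hk uk]] := un _ (hX w).
  exists k; split => //; split.
    rewrite /binned /bin_index; case: pickP => [j hj|none].
      by rewrite -(uk j hj).
    by move: (none k); rewrite -/X hk.
  move=> j jk; rewrite indicE memNset //= => hj.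
  by move: jk; rewrite (uk j hj) eqxx.
have binE : forall w, binned P Z g I (Z w) = \sum_(k < B) mu k * \1_(A k) (X w).
  move=> w; have [k [hk [-> hj]]] := binw w.
  rewrite (bigD1 k) //= big1 ?addr0.
    by rewrite indicE mem_set ?mulr1.
  by move=> j jk; rewrite hj ?mulr0.
pose S w := \sum_(k < B) (2 * wd k) * \1_(A k) (X w).
have S0 : forall w, 0 <= S w.
  by move=> w; apply: sumr_ge0 => k _; rewrite indicE !mulr_ge0.
have pwi : forall w, (binned P Z g I (Z w) - Y w) ^+ 2 <= (g (Z w) - Y w) ^+ 2 + S w.
  move=> w; have [k [hk [-> hj]]] := binw w.
  have [m0 m1 m2 m3] := mub k (X w) hk.
  have Sk : 2 * wd k <= S w.
    rewrite /S (bigD1 k) //= indicE mem_set ?mulr1 //.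
    rewrite lerDl; apply: sumr_ge0 => j _; rewrite indicE !mulr_ge0 //.
  have := hX w; rewrite /X /= => /andP[b0 b1].
  have wk0 := w0 k.
  rewrite /X /= in m2 m3.
  case: (Y01 w) => ->; nra.
rewrite /MSE unlock.
have mI : forall k, measurable_fun setT (fun w => \1_(A k) (X w) : R).
  by move=> k; exact: (measurableT_comp (measurable_indic (mA k)) mX).
have mG : measurable_fun setT (fun w => (g (Z w) - Y w) ^+ 2).
  by apply: measurable_funX; apply: measurable_funB.
have mS : measurable_fun setT S.
  by apply: measurable_sum => k; apply: measurable_funM => //.
have mF : measurable_fun setT (fun w => (binned P Z g I (Z w) - Y w) ^+ 2).
  have -> : (fun w => (binned P Z g I (Z w) - Y w) ^+ 2) =
      (fun w => (\sum_(k < B) mu k * \1_(A k) (X w) - Y w) ^+ 2).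
    by apply/funext => w; rewrite binE.
  apply: measurable_funX; apply: measurable_funB => //.
  by apply: measurable_sum => k; apply: measurable_funM => //.
apply: (@le_trans _ _ (\int[P]_w ((g (Z w) - Y w) ^+ 2 + S w)%:E)%E).
  apply: ge0_le_integral => //.
  - by move=> w _; rewrite lee_fin sqr_ge0.
  - by apply/measurable_EFinP.
  - by apply/measurable_EFinP; apply: measurable_funD.
  - by move=> w _; rewrite lee_fin pwi.
rewrite (eq_integral (fun w => ((g (Z w) - Y w) ^+ 2)%:E + (S w)%:E)%E); last first.
  by move=> w _; rewrite EFinD.
rewrite ge0_integralD //; last 4 first.
- by move=> w _; rewrite lee_fin sqr_ge0.
- by apply/measurable_EFinP.
- by move=> w _; rewrite lee_fin.
- by apply/measurable_EFinP.
apply: leeD2l.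
rewrite (eq_integral (fun w => \sum_(k < B) ((2 * wd k) * \1_(A k) (X w))%:E)%E); last first.
  by move=> w _; rewrite sumEFin.
rewrite ge0_integral_sum //; last 2 first.
- by move=> k; apply/measurable_EFinP; apply: measurable_funM => //.
- by move=> k w _; rewrite lee_fin indicE !mulr_ge0.
rewrite (eq_bigr (fun k => ((2 * wd k) * p k)%:E)); last first.
  by move=> k _; rewrite int_indic ?hp -?EFinM // mulr_ge0.
rewrite sumEFin lee_fin.
apply: (@le_trans _ _ (\sum_(k < B) (2 * alpha / B%:R) * wd k)).
  apply: ler_sum => k _.
  have := pup k; have := w0 k; have := pp k.
  move=> ? ? ?.
  have h : (2 * wd k) * p k <= (2 * wd k) * (alpha / B%:R).
    by rewrite ler_wpM2l // mulr_ge0.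
  by apply: le_trans h _; rewrite le_eqVlt; apply/orP; left; apply/eqP; ring.
rewrite -mulr_sumr.
have c0 : 0 <= 2 * alpha / B%:R by rewrite divr_ge0 ?mulr_ge0 // ltW.
move: sw c0; set s := \sum_(k < B) wd k; set c := 2 * alpha / B%:R => ? ?.
nra.
Qed.
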